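(* Consider the multi-agent system with $N$ agents, $\mathcal{I}=\{1,\dots,N\}$, where for each $i\in\mathcal{I}$ \[ \dot x_i=-x_i+B_iu_i,\qquad y_i=h_i(x_i,\mathbf{x}_{-i}), \] with $x_i\in\mathbb{R}^{n_i}$, $u_i\in\mathbb{R}^{m_i}$, $B_i\in\mathbb{R}^{n_i\times m_i}$, in closed loop with the full-information control law \[ \dot u_i=-\frac{1}{\tau_i}B_i^\top \nabla_{x_i}h_i(x_i,\mathbf{x}_{-i}),\qquad \tau_i>0,\ i\in\mathcal{I}, \] equivalently $\dot{\mathbf{u}}=-\boldsymbol{\tau}^{-1}\mathbf{B}^\top F_{\mathrm{x}}(\mathbf{x})$ with $\mathbf{B}=\mathrm{diag}(B_1,\dots,B_N)$ and $\boldsymbol{\tau}=\mathrm{diag}(\tau_1 I_{m_1},\dots,\tau_N I_{m_N})$. Suppose Standing Assumptions 1 and 2 (see context) hold. Then there exists $\tau^*>0$ such that, whenever $\min_{i\in\mathcal{I}}\tau_i\ge\tau^*$, every closed-loop solution $(\mathbf{x}(t),\mathbf{u}(t))$ converges to $(\mathbf{x}^*,\mathbf{u}^* )=(\pi(\mathbf{u}^* ),\mathbf{u}^* )$, where $\mathbf{u}^*$ is a Nash equilibrium of the game below (equivalently, the zero of $F$).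
   Context: Notation: $n=\sum_i n_i$, $m=\sum_i m_i$; $\mathbf{x}=(x_1^\top,\dots,x_N^\top)^\top$, $\mathbf{x}_{-i}$ is $\mathbf{x}$ with block $x_i$ removed (similarly $\mathbf{u}$, $\mathbf{u}_{-i}$). Each $h_i:\mathbb{R}^{n_i}\times\mathbb{R}^{n-n_i}\to\mathbb{R}$. Steady-state map: $\pi(\mathbf{u})=(\pi_1(u_1),\dots,\pi_N(u_N))$ with $\pi_i(u_i)=B_iu_i$ (the equilibrium of $\dot x_i=-x_i+B_iu_i$ under constant input $u_i$); $\pi_{-i}(\mathbf{u}_{-i})$ stacks $\pi_j(u_j)$, $j\ne i$. Game: each agent $i$ solves $\min_{u_i\in\mathbb{R}^{m_i}} h_i(\pi_i(u_i),\pi_{-i}(\mathbf{u}_{-i}))$. A Nash equilibrium is $\mathbf{u}^*$ with $h_i(\pi_i(u_i^* ),\pi_{-i}(\mathbf{u}^*_{-i}))\le \inf_{u_i} h_i(\pi_i(u_i),\pi_{-i}(\mathbf{u}^*_{-i}))$ for all $i$. Pseudo-gradients: $F(\mathbf{u})=\big(\nabla_{u_i}h_i(\pi_i(u_i),\pi_{-i}(\mathbf{u}_{-i}))\big)_{i\in\mathcal{I}}\in\mathbb{R}^m$ and $F_{\mathrm{x}}(\mathbf{x})=\big(\nabla_{x_i}h_i(x_i,\mathbf{x}_{-i})\big)_{i\in\mathcal{I}}\in\mathbb{R}^n$. Standing Assumption 1 (Regularity): for each $i$, $h_i$ is differentiable in $x_i$ and $\nabla_{x_i}h_i$ is Lipschitz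 continuous in $(x_i,\mathbf{x}_{-i})$. Standing Assumption 2 (Strong monotonicity): there is $\mu>0$ with $(F(\mathbf{u})-F(\mathbf{v}))^\top(\mathbf{u}-\mathbf{v})\ge\mu\|\mathbf{u}-\mathbf{v}\|^2$ for all $\mathbf{u},\mathbf{v}\in\mathbb{R}^m$. *)

(* Defs.v *)
From Stdlib Require Import Reals.
From mathcomp Require Import all_boot.
Set Implicit Arguments. Unset Strict Implicit. Unset Printing Implicit Defensive.

Local Open Scope R_scope.

Definition sumR (n : nat) (F : 'I_n -> R) : R := \big[Rplus/0]_(k < n) F k.

(* Block vectors: N blocks, block i lives in R^(d i).  BV N d = R^(sum_i d i). *)
Definition BV (N : nat) (d : 'I_N -> nat) : Type := forall i : 'I_N, 'I_(d i) -> R.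

Arguments BV : clear implicits.

Definition bvadd N d (x y : BV N d) : BV N d := fun i k => x i k + y i k.
Definition bvsub N d (x y : BV N d) : BV N d := fun i k => x i k - y i k.
Definition bvdot N d (x y : BV N d) : R := sumR (fun i => sumR (fun k => x i k * y i k)).
Definition bvnorm N d (x : BV N d) : R := sqrt (bvdot x x).
Definition vnorm (n : nat) (v : 'I_n -> R) : R := sqrt (sumR (fun k => v k * v k)).

Definition PartialGrad N d (f : BV N d -> R) (i : 'I_N)
  (g : BV N d -> 'I_(d i) -> R) : Prop :=
  forall (x : BV N d) (eps : R), 0 < eps -> exists delta, 0 < delta /\
    forall dx : BV N d, (forall j, j <> i -> forall k, dx j k = 0) ->
      bvnorm dx < delta ->
      Rabs (f (bvadd x dx) - f x - sumR (fun k => g x k * dx i k)) <= eps * bvnorm dx.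

(* Steady-state map pi(u) = (B_1 u_1, ..., B_N u_N); B i is an n_i x m_i matrix *)
Definition ssmap N (n m : 'I_N -> nat) (B : forall i : 'I_N, 'I_(n i) -> 'I_(m i) -> R)
  (u : BV N m) : BV N n := fun i k => sumR (fun l => B i k l * u i l).

(* Nash equilibrium of the game  min_{u_i} h_i(pi_i(u_i), pi_{-i}(u_{-i})):
   no agent can lower its cost by a unilateral deviation. *)
Definition NashEq N (n m : 'I_N -> nat) (B : forall i : 'I_N, 'I_(n i) -> 'I_(m i) -> R)
  (h : 'I_N -> BV N n -> R) (ustar : BV N m) : Prop :=
  forall (i : 'I_N) (v : BV N m), (forall j, j <> i -> forall l, v j l = ustar j l) ->
    h i (ssmap B ustar) <= h i (ssmap B v).

Definition bv_conv N d (x : R -> BV N d) (xs : BV N d) : Prop :=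
  forall eps, 0 < eps -> exists T, forall t, T <= t -> bvnorm (bvsub (x t) xs) < eps.

Arguments PartialGrad {N d} f i g.
Arguments NashEq {N n m} B h ustar.
Arguments ssmap {N n m} B u _ _.
Arguments bv_conv {N d} x xs.

(* Main.v *)
Require Import Defs.
From HB Require Import structures.
From Stdlib Require Import Reals Lra Psatz FunctionalExtensionality ClassicalEpsilon.
From mathcomp Require Import all_boot.
From mathcomp Require Import zify.
Local Open Scope R_scope.
Set Implicit Arguments. Unset Strict Implicit.

Lemma RplusA : associative Rplus. Proof. move=> a b c; ring. Qed.
Lemma RplusC : commutative Rplus. Proof. move=> a b; ring. Qed.
Lemma Rplus0 : left_id 0 Rplus. Proof. move=> a; ring. Qed.
HB.instance Definition _ := Monoid.isComLaw.Build R 0 Rplus RplusA RplusC Rplus0.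

Lemma sumR_ext n (f g : 'I_n -> R) : (forall k, f k = g k) -> sumR f = sumR g.
Proof. move=> H; rewrite /sumR; apply: eq_bigr => k _; exact: H. Qed.
Lemma sumR_add n (f g : 'I_n -> R) : sumR (fun k => f k + g k) = sumR f + sumR g.
Proof. by rewrite /sumR big_split. Qed.
Lemma sumR_exch n p (f : 'I_n -> 'I_p -> R) : sumR (fun k => sumR (fun l => f k l)) = sumR (fun l => sumR (fun k => f k l)).
Proof. rewrite /sumR. exact: exchange_big. Qed.
Lemma sumR_scal n c (f : 'I_n -> R) : c * sumR f = sumR (fun k => c * f k).
Proof.
rewrite /sumR. apply: (big_ind2 (fun a b => c * a = b)); first ring.
  by move=> a b x y <- <-; ring.
by [].
Qed.
Lemma sumR_0 n (f : 'I_n -> R) : (forall k, f k = 0) -> sumR f = 0.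
Proof. move=> H; rewrite /sumR big1 // => k _; exact: H. Qed.
Lemma sumR_le n (f g : 'I_n -> R) : (forall k, f k <= g k) -> sumR f <= sumR g.
Proof.
move=> H; rewrite /sumR. apply: (big_ind2 (fun a b => a <= b)); first lra.
  move=> *; lra.
move=> k _; exact: H.
Qed.
Lemma sumR_ge0 n (f : 'I_n -> R) : (forall k, 0 <= f k) -> 0 <= sumR f.
Proof. move=> H; have := @sumR_le n (fun _ => 0) f H. by rewrite sumR_0. Qed.
Lemma sumR_one n (f : 'I_n -> R) i : (forall j, j <> i -> f j = 0) -> sumR f = f i.
Proof.
move=> H; rewrite /sumR (bigD1 i) //= big1 ?Rplus_0_r // => j /eqP; exact: H.
Qed.
Lemma sumR_term n (f : 'I_n -> R) i : (forall k, 0 <= f k) -> f i <= sumR f.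
Proof.
move=> H; rewrite /sumR (bigD1 i) //=.
set r := \big[_/_]_(_ < _ | _) _.
have : 0 <= r.
  apply: (big_ind (fun a => 0 <= a)); first lra. move=> *; lra. move=> *; exact: H.
lra.
Qed.
Lemma sumR_recr n (f : 'I_n.+1 -> R) :
  sumR f = sumR (fun k => f (widen_ord (leqnSn n) k)) + f ord_max.
Proof. by rewrite /sumR big_ord_recr. Qed.
Lemma sumR_nil (f : 'I_0 -> R) : sumR f = 0.
Proof. by rewrite /sumR big_ord0. Qed.
Lemma sumR_const_le n (f : 'I_n -> R) b : (forall k, f k <= b) -> sumR f <= INR n * b.
Proof.
move=> H; apply: Rle_trans (@sumR_le n f (fun _ => b) H) _.
elim: n {f H} => [|n IH]; first by rewrite sumR_nil /INR; lra.
rewrite S_INR sumR_recr. have := IH. lra.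
Qed.

Lemma sumR_CS n (a b : 'I_n -> R) :
  (sumR (fun k => a k * b k))^2 <= sumR (fun k => a k * a k) * sumR (fun k => b k * b k).
Proof.
elim: n a b => [|n IH] a b; first by rewrite !sumR_nil; lra.
rewrite !sumR_recr.
have := IH (fun k => a (widen_ord (leqnSn n) k)) (fun k => b (widen_ord (leqnSn n) k)).
have HA := @sumR_ge0 n (fun k => a (widen_ord (leqnSn n) k) * a (widen_ord (leqnSn n) k)) (fun k => ltac:(nra)).
have HB := @sumR_ge0 n (fun k => b (widen_ord (leqnSn n) k) * b (widen_ord (leqnSn n) k)) (fun k => ltac:(nra)).
set S := sumR (fun k => a _ * b _).
set A := sumR (fun k => a _ * a _). set Bb := sumR (fun k => b _ * b _).
move=> HS.
set x := a ord_max. set y := b ord_max.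
have key : 2 * S * x * y <= A * (y*y) + (x*x) * Bb.
  have H0 : 0 <= A * (y*y) + (x*x) * Bb.
    apply: Rplus_le_le_0_compat; apply: Rmult_le_pos => //; nra.
  apply: Rnot_lt_le => Hc.
  have H1 : (A * (y*y) + (x*x) * Bb)^2 < (2 * S * x * y)^2.
    have Hp : 0 < (2*S*x*y - (A*(y*y)+x*x*Bb)) * (2*S*x*y + (A*(y*y)+x*x*Bb)).
      apply Rmult_lt_0_compat; lra.
    have -> : (2 * S * x * y)^2 = (A * (y*y) + (x*x) * Bb)^2 + (2*S*x*y - (A*(y*y)+x*x*Bb)) * (2*S*x*y + (A*(y*y)+x*x*Bb)) by ring.
    lra.
  have H2 : 4 * (A*Bb) * (x*x*(y*y)) <= (A * (y*y) + (x*x) * Bb)^2.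
    have -> : (A * (y*y) + (x*x) * Bb)^2 = 4 * (A*Bb) * (x*x*(y*y)) + (A*(y*y) - x*x*Bb)^2 by ring.
    have := pow2_ge_0 (A*(y*y) - x*x*Bb). lra.
  have H3 : (2 * S * x * y)^2 <= 4 * (A*Bb) * (x*x*(y*y)).
    have -> : (2 * S * x * y)^2 = 4 * S^2 * (x*x*(y*y)) by ring.
    apply: Rmult_le_compat_r; first nra. lra.
  lra.
nra.
Qed.

Section BVL.
Variable N : nat.
Variable d : 'I_N -> nat.
Definition sum2 (a : forall i : 'I_N, 'I_(d i) -> R) := sumR (fun i => sumR (fun k => a i k)).
Definition nsq (x : BV N d) := bvdot x x.

Lemma sum2_ext a b : (forall i k, a i k = b i k) -> sum2 a = sum2 b.
Proof. move=> H; apply: sumR_ext => i; apply: sumR_ext => k; exact: H. Qed.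
Lemma sum2_le a b : (forall i k, a i k <= b i k) -> sum2 a <= sum2 b.
Proof. move=> H; apply: sumR_le => i; apply: sumR_le => k; exact: H. Qed.
Lemma sum2_ge0 a : (forall i k, 0 <= a i k) -> 0 <= sum2 a.
Proof. move=> H; apply: sumR_ge0 => i; apply: sumR_ge0 => k; exact: H. Qed.
Lemma sum2_add a b : sum2 (fun i k => a i k + b i k) = sum2 a + sum2 b.
Proof. rewrite /sum2 -sumR_add; apply: sumR_ext => i; exact: sumR_add. Qed.
Lemma sum2_scal c a : c * sum2 a = sum2 (fun i k => c * a i k).
Proof. rewrite /sum2 sumR_scal; apply: sumR_ext => i; exact: sumR_scal. Qed.
Lemma sum2_term a i k : (forall i k, 0 <= a i k) -> a i k <= sum2 a.
Proof.
move=> H. apply: (Rle_trans _ (sumR (fun k => a i k))).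
  exact (@sumR_term (d i) (fun k => a i k) k (H i)).
apply (@sumR_term N (fun i => sumR (fun k => a i k)) i) => j. apply: sumR_ge0; exact: H.
Qed.
Lemma sum2_one a i : (forall j, j <> i -> forall k, a j k = 0) -> sum2 a = sumR (a i).
Proof.
move=> H. rewrite /sum2 (@sumR_one N _ i) //. move=> j Hj; apply: sumR_0; exact: H.
Qed.
Lemma nsq_ge0 x : 0 <= nsq x.
Proof. apply: sum2_ge0 => i k; nra. Qed.
Lemma bvnorm_sq x : bvnorm x ^ 2 = nsq x.
Proof. rewrite /bvnorm /= Rmult_1_r sqrt_sqrt //; exact: nsq_ge0. Qed.
Lemma comp_le_nsq x i k : x i k * x i k <= nsq x.
Proof. apply (@sum2_term (fun i k => x i k * x i k) i k) => *; nra. Qed.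
Lemma nsq_bound x b : (forall i k, Rabs (x i k) <= b) -> nsq x <= b * b * sum2 (fun _ _ => 1).
Proof.
move=> H. rewrite sum2_scal. apply: sum2_le => i k. rewrite Rmult_1_r.
have := H i k. rewrite /Rabs; case: Rcase_abs => ? ?; nra.
Qed.
Lemma nsq_ext x y : (forall i k, x i k = y i k) -> nsq x = nsq y.
Proof. move=> H; apply: sum2_ext => i k; rewrite H; lra. Qed.
Lemma bvnorm_ext (x y : BV N d) : (forall i k, x i k = y i k) -> bvnorm x = bvnorm y.
Proof. move=> H; rewrite /bvnorm; congr sqrt; exact: nsq_ext. Qed.
Lemma bvnorm_scal (s : R) (x : BV N d) : bvnorm (fun i k => s * x i k) = Rabs s * bvnorm x.
Proof.
rewrite /bvnorm. have -> : bvdot (fun i k => s * x i k) (fun i k => s * x i k) = (s*s) * nsq x.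
  rewrite /nsq /bvdot -/(sum2 _) -/(sum2 _) sum2_scal; apply: sum2_ext => *; ring.
rewrite sqrt_mult; try nra; last exact: nsq_ge0.
by rewrite (sqrt_Rsqr_abs s).
Qed.
Lemma young c (x y : BV N d) : 0 < c -> 2 * bvdot x y <= c * nsq x + / c * nsq y.
Proof.
move=> Hc. rewrite /nsq /bvdot -!/(sum2 _) !sum2_scal -sum2_add. apply: sum2_le => i k.
have Hc' : 0 < / c by apply: Rinv_0_lt_compat.
have : 0 <= / c * (c * x i k - y i k) ^ 2 by apply: Rmult_le_pos; [lra | apply: pow2_ge_0].
have -> : / c * (c * x i k - y i k) ^ 2 = c * (x i k * x i k) - 2 * (x i k * y i k) + / c * (y i k * y i k).
  field; lra.
lra.
Qed.
Lemma nsq_add2 (x y : BV N d) : nsq (fun i k => x i k + y i k) <= 2 * nsq x + 2 * nsq y.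
Proof.
rewrite /nsq /bvdot -!/(sum2 _) !sum2_scal -sum2_add. apply: sum2_le => i k. have := pow2_ge_0 (x i k - y i k). nra.
Qed.
End BVL.

Lemma sumR_sub n (f g : 'I_n -> R) : sumR (fun k => f k - g k) = sumR f - sumR g.
Proof.
have -> : sumR (fun k => f k - g k) = sumR f + sumR (fun k => -1 * g k).
  rewrite -sumR_add; apply: sumR_ext => k; ring.
rewrite -sumR_scal; ring.
Qed.
Lemma sumR_scalr n c (f : 'I_n -> R) : sumR f * c = sumR (fun k => f k * c).
Proof. rewrite Rmult_comm sumR_scal; apply: sumR_ext => k; ring. Qed.

Definition blk N (d : 'I_N -> nat) (i : 'I_N) (z : 'I_(d i) -> R) : BV N d :=
  fun j => match j =P i with
           | ReflectT e => fun l => z (cast_ord (congr1 d e) l)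
           | ReflectF _ => fun _ => 0 end.
Lemma blk_off N d i z j l : j <> i -> @blk N d i z j l = 0.
Proof. move=> H; rewrite /blk; case: eqP => // e; by case: H. Qed.
Lemma blk_on N d i z l : @blk N d i z i l = z l.
Proof. rewrite /blk; case: eqP => // e; congr z; exact: val_inj. Qed.
Lemma nsq_blk N d i z : nsq (@blk N d i z) = sumR (fun l => z l * z l).
Proof.
rewrite /nsq /bvdot -/(sum2 _) (@sum2_one N d _ i).
  apply: sumR_ext => l; by rewrite blk_on.
move=> j Hj k; rewrite blk_off //; ring.
Qed.

Lemma Rabs_le2 x e : Rabs x <= e -> -e <= x <= e.
Proof. rewrite /Rabs; case: Rcase_abs => ? ?; lra. Qed.

Unset Implicit Arguments.
Section Prob.
Variables (N : nat) (n m : 'I_N -> nat) (B : forall i : 'I_N, 'I_(n i) -> 'I_(m i) -> R).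
Variable Fx : forall i : 'I_N, BV N n -> 'I_(n i) -> R.

Definition Gx (x : BV N n) : BV N m := fun i l => sumR (fun k => B i k l * Fx i x k).
Definition KP := sumR (fun i => sumR (fun k => sumR (fun l => B i k l * B i k l))).
Definition KT := sumR (fun i => sumR (fun l => sumR (fun k => B i k l * B i k l))).

Lemma KP_ge0 : 0 <= KP.
Proof. apply: sumR_ge0 => i; apply: sumR_ge0 => k; apply: sumR_ge0 => l; nra. Qed.
Lemma KT_ge0 : 0 <= KT.
Proof. apply: sumR_ge0 => i; apply: sumR_ge0 => k; apply: sumR_ge0 => l; nra. Qed.

Lemma ssmap_bound v : nsq (ssmap B v) <= KP * nsq v.
Proof.
rewrite /nsq /bvdot /KP sumR_scal. apply: sumR_le => i.
apply: (Rle_trans _ (sumR (fun k => sumR (fun l => B i k l * B i k l)) * sumR (fun l => v i l * v i l))).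
  rewrite sumR_scalr. apply: sumR_le => k.
  have := sumR_CS (fun l => B i k l) (fun l => v i l). rewrite /ssmap. lra.
apply: Rmult_le_compat_r; first by apply: sumR_ge0 => l; nra.
apply (@sumR_term N (fun i => sumR (fun k => sumR (fun l => B i k l * B i k l))) i) => j.
apply: sumR_ge0 => k; apply: sumR_ge0 => l; nra.
Qed.

Lemma BT_bound (z : BV N n) : nsq (fun i l => sumR (fun k => B i k l * z i k)) <= KT * nsq z.
Proof.
rewrite /nsq /bvdot /KT sumR_scal. apply: sumR_le => i.
apply: (Rle_trans _ (sumR (fun l => sumR (fun k => B i k l * B i k l)) * sumR (fun k => z i k * z i k))).
  rewrite sumR_scalr. apply: sumR_le => l.
  have := sumR_CS (fun k => B i k l) (fun k => z i k). lra.
apply: Rmult_le_compat_r; first by apply: sumR_ge0 => l; nra.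
apply (@sumR_term N (fun i => sumR (fun l => sumR (fun k => B i k l * B i k l))) i) => j.
apply: sumR_ge0 => k; apply: sumR_ge0 => l; nra.
Qed.

Lemma ssmap_norm v : bvnorm (ssmap B v) <= sqrt KP * bvnorm v.
Proof.
rewrite /bvnorm -sqrt_mult; [|exact: KP_ge0|exact: nsq_ge0].
apply: sqrt_le_1_alt; exact: ssmap_bound.
Qed.

Lemma ssmap_lin a b (u v : BV N m) i k :
  ssmap B (fun j l => a * u j l + b * v j l) i k = a * ssmap B u i k + b * ssmap B v i k.
Proof.
rewrite /ssmap !sumR_scal -sumR_add; apply: sumR_ext => l; ring.
Qed.

Lemma Gx_lin a b (z1 z2 : BV N n) (x y : BV N n) i l :
  (forall i k, a * Fx i x k + b * Fx i y k = z1 i k) -> a * Gx x i l + b * Gx y i l = sumR (fun k => B i k l * z1 i k).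
Proof.
move=> H. rewrite /Gx !sumR_scal -sumR_add; apply: sumR_ext => k; rewrite -H; ring.
Qed.

Variable L : 'I_N -> R.
Hypothesis HL : forall i x y, vnorm (fun k => Fx i x k - Fx i y k) <= L i * bvnorm (bvsub x y).
Definition Lx := sumR (fun i => L i * L i).
Lemma Lx_ge0 : 0 <= Lx.
Proof. apply: sumR_ge0 => i; nra. Qed.

Lemma Fx_lip x y : nsq (fun i k => Fx i x k - Fx i y k) <= Lx * nsq (bvsub x y).
Proof.
set T := nsq (bvsub x y).
have HT : 0 <= T by apply: nsq_ge0.
have Hi : forall i, sumR (fun k => (Fx i x k - Fx i y k) * (Fx i x k - Fx i y k)) <= L i * L i * T.
  move=> i. have H := HL i x y. move: H. rewrite /vnorm /bvnorm -/(nsq _) -/T.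
  set S := sumR _.
  have HS : 0 <= S.
    apply: sumR_ge0 => k; exact: Rle_0_sqr.
  move=> H.
  have H0 := sqrt_pos S.
  have : sqrt S * sqrt S <= (L i * sqrt T) * (L i * sqrt T) by apply: Rmult_le_compat; lra.
  rewrite sqrt_sqrt //.
  have -> : L i * sqrt T * (L i * sqrt T) = L i * L i * (sqrt T * sqrt T) by ring.
  by rewrite sqrt_sqrt.
rewrite /Lx sumR_scalr. exact: sumR_le.
Qed.

Lemma Gx_lip x y : nsq (fun i l => Gx x i l - Gx y i l) <= KT * Lx * nsq (bvsub x y).
Proof.
have -> : nsq (fun i l => Gx x i l - Gx y i l) =
  nsq (fun i l => sumR (fun k => B i k l * (fun i k => Fx i x k - Fx i y k) i k)).
  apply: nsq_ext => i l. rewrite -(@Gx_lin 1 (-1) (fun i k => Fx i x k - Fx i y k) x x y) //.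
    ring.
  move=> *; ring.
apply: Rle_trans (BT_bound _) _. rewrite Rmult_assoc. apply: Rmult_le_compat_l; first exact: KT_ge0.
exact: Fx_lip.
Qed.

Lemma F_eq (i : 'I_N) (hi : BV N n -> R) (Fi : BV N m -> 'I_(m i) -> R)
  (Hd : PartialGrad hi i (Fx i)) (HFi : PartialGrad (fun u => hi (ssmap B u)) i Fi) u :
  forall l, Fi u l = Gx (ssmap B u) i l.
Proof.
set z := fun l => Fi u l - Gx (ssmap B u) i l.
set Z := sumR (fun l => z l * z l).
have HZ0 : 0 <= Z by apply: sumR_ge0 => k; exact: Rle_0_sqr.
have key : forall eps, 0 < eps -> Z <= eps * sqrt Z * (1 + sqrt KP).
  move=> eps Heps.
  have [d1 [Hd1 H1]] := HFi u eps Heps.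
  have [d2 [Hd2 H2]] := Hd (ssmap B u) eps Heps.
  have HsZ := sqrt_pos Z. have HsK := sqrt_pos KP.
  move: HsZ HsK. set sZ := sqrt Z. set sK := sqrt KP. move=> HsZ HsK.
  have Hmin : 0 < Rmin d1 d2 by apply: Rmin_pos.
  have Hm1 := Rmin_l d1 d2. have Hm2 := Rmin_r d1 d2.
  set s := Rmin d1 d2 / ((sZ + 1) * (sK + 1)).
  have Hden : 0 < (sZ + 1) * (sK + 1) by nra.
  have Hs : 0 < s by apply: Rdiv_lt_0_compat.
  have E : s * ((sZ + 1) * (sK + 1)) = Rmin d1 d2 by rewrite /s; field; lra.
  have Hs1 : s * sZ < d1 by nra.
  have Hs2 : sK * (s * sZ) < d2 by nra.
  set dv : BV N m := fun j l => s * @blk N m i z j l.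
  have Hoff : forall j, j <> i -> forall l, dv j l = 0.
    by move=> j Hj l; rewrite /dv blk_off //; ring.
  have Hndv : bvnorm dv = s * sZ.
    rewrite /dv bvnorm_scal Rabs_pos_eq; last lra.
    by rewrite /bvnorm -/(nsq _) nsq_blk.
  have A := H1 dv Hoff ltac:(rewrite Hndv; lra).
  set dx := ssmap B dv.
  have Hoffx : forall j, j <> i -> forall k, dx j k = 0.
    move=> j Hj k; rewrite /dx /ssmap sumR_0 // => l; rewrite Hoff //; ring.
  have Hndx : bvnorm dx <= sK * (s * sZ) by rewrite -Hndv; exact: ssmap_norm.
  have Bq := H2 dx Hoffx ltac:(lra).
  have Eq1 : hi (ssmap B (bvadd u dv)) = hi (bvadd (ssmap B u) dx).
    congr hi; apply functional_extensionality_dep => j; apply functional_extensionality => k.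
    rewrite /bvadd /dx /ssmap -sumR_add; apply: sumR_ext => l; ring.
  have Eq2 : sumR (fun k => Fx i (ssmap B u) k * dx i k) = sumR (fun l => Gx (ssmap B u) i l * dv i l).
    rewrite /Gx.
    have -> : sumR (fun k => Fx i (ssmap B u) k * dx i k) =
       sumR (fun k => sumR (fun l => Fx i (ssmap B u) k * (B i k l * dv i l))).
      apply: sumR_ext => k; rewrite sumR_scal //.
    rewrite sumR_exch; apply: sumR_ext => l; rewrite sumR_scalr; apply: sumR_ext => k; ring.
  have Eq3 : sumR (fun l => Fi u l * dv i l) - sumR (fun l => Gx (ssmap B u) i l * dv i l) = s * Z.
    rewrite -sumR_sub /Z sumR_scal; apply: sumR_ext => l; rewrite /dv blk_on /z; ring.
  move: A Bq. cbv beta. rewrite Eq1 Hndv.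
  set P := hi (bvadd (ssmap B u) dx). set Q := hi (ssmap B u).
  move: Eq3. rewrite -Eq2.
  set a := sumR (fun l => Fi u l * dv i l). set b := sumR (fun k => Fx i (ssmap B u) k * dx i k).
  move=> Eq3 HA HB.
  have HA' := Rabs_le2 HA. have HB' := Rabs_le2 HB.
  have Hx : eps * bvnorm dx <= eps * (sK * (s * sZ)) by apply: Rmult_le_compat_l; lra.
  have : s * Z <= s * (eps * sZ * (1 + sK)) by nra.
  move=> H; apply: (Rmult_le_reg_l s) => //.
have HZ : Z = 0.
  apply: Rle_antisym => //. apply: Rnot_lt_le => HZp.
  have HsZ : 0 < sqrt Z by apply: sqrt_lt_R0.
  have HsK := sqrt_pos KP.
  have := key (sqrt Z / (2 * (1 + sqrt KP))) ltac:(apply: Rdiv_lt_0_compat; lra).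
  have -> : sqrt Z / (2 * (1 + sqrt KP)) * sqrt Z * (1 + sqrt KP) = (sqrt Z * sqrt Z) / 2 by field; lra.
  rewrite sqrt_sqrt; lra.
move=> l.
have := @sumR_term _ (fun l => z l * z l) l (fun k => Rle_0_sqr _).
rewrite -/Z HZ => Hl.
have Hz : z l * z l = 0 by have := Rle_0_sqr (z l); rewrite /Rsqr; lra.
have : z l = 0 by case: (Rmult_integral _ _ Hz).
rewrite /z; lra.
Qed.

Lemma nash (h : 'I_N -> BV N n -> R) (F : forall i : 'I_N, BV N m -> 'I_(m i) -> R)
  (HF : forall i, PartialGrad (fun u => h i (ssmap B u)) i (F i)) (mu : R) (Hmu : 0 < mu)
  (Hmon : forall u v : BV N m,
      bvdot (fun i l => F i u l - F i v l) (bvsub u v) >= mu * (bvnorm (bvsub u v))^2)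
  (us : BV N m) (Hus : forall i l, F i us l = 0) : NashEq B h us.
Proof.
move=> i v Hv.
set d : BV N m := bvsub v us.
have Hd : forall j, j <> i -> forall l, d j l = 0.
  by move=> j Hj l; rewrite /d /bvsub Hv //; ring.
pose w := fun s : R => (fun j l => us j l + s * d j l) : BV N m.
pose phi := fun s => h i (ssmap B (w s)).
pose phi' := fun s => sumR (fun l => F i (w s) l * d i l).
have Hnd := bvnorm_sq d.
have Hnd0 : 0 <= bvnorm d by apply: sqrt_pos.
have Hder : forall s, derivable_pt_lim phi s (phi' s).
  move=> s eps Heps.
  have Heps' : 0 < eps / (bvnorm d + 1) by apply: Rdiv_lt_0_compat; lra.
  have [d0 [Hd0 H0]] := HF i (w s) _ Heps'.
  have Hdel : 0 < d0 / (bvnorm d + 1) by apply: Rdiv_lt_0_compat; lra.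
  exists (mkposreal _ Hdel) => hh Hh0 Hhd. simpl in Hhd.
  have Hah : 0 < Rabs hh by apply: Rabs_pos_lt.
  set dv : BV N m := fun j l => hh * d j l.
  have Hoff : forall j, j <> i -> forall l, dv j l = 0.
    by move=> j Hj l; rewrite /dv Hd //; ring.
  have Hndv : bvnorm dv = Rabs hh * bvnorm d by rewrite /dv bvnorm_scal.
  have Hlt : Rabs hh * (bvnorm d + 1) < d0.
    have := Rmult_lt_compat_r (bvnorm d + 1) _ _ ltac:(lra) Hhd.
    have -> : d0 / (bvnorm d + 1) * (bvnorm d + 1) = d0 by field; lra.
    by [].
  have := H0 dv Hoff ltac:(rewrite Hndv; nra).
  cbv beta.
  have -> : ssmap B (bvadd (w s) dv) = ssmap B (w (s + hh)).
    congr ssmap; apply functional_extensionality_dep => j; apply functional_extensionality => l.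
    rewrite /bvadd /w /dv; ring.
  have -> : sumR (fun l => F i (w s) l * dv i l) = hh * phi' s.
    rewrite /phi' sumR_scal; apply: sumR_ext => l; rewrite /dv; ring.
  rewrite -/(phi (s + hh)) -/(phi s) Hndv => H.
  have -> : (phi (s + hh) - phi s) / hh - phi' s = (phi (s + hh) - phi s - hh * phi' s) * / hh
    by field.
  rewrite Rabs_mult Rabs_inv.
  apply: (Rmult_lt_reg_r (Rabs hh)) => //.
  rewrite Rmult_assoc Rinv_l; last lra.
  rewrite Rmult_1_r.
  apply: Rle_lt_trans H _.
  have -> : eps / (bvnorm d + 1) * (Rabs hh * bvnorm d) = eps * Rabs hh * (bvnorm d / (bvnorm d + 1)) by field; lra.
  have : bvnorm d / (bvnorm d + 1) < 1.
    apply: (Rmult_lt_reg_r (bvnorm d + 1)); first lra.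
    have -> : bvnorm d / (bvnorm d + 1) * (bvnorm d + 1) = bvnorm d by field; lra.
    lra.
  move=> Hq. have : 0 < eps * Rabs hh by nra.
  have : 0 <= bvnorm d / (bvnorm d + 1) by apply: Rmult_le_pos; [lra | apply: Rlt_le; apply: Rinv_0_lt_compat; lra].
  nra.
have Hpos : forall s, 0 < s -> 0 <= phi' s.
  move=> s Hs.
  have := Hmon (w s) us.
  have -> : bvdot (fun j l => F j (w s) l - F j us l) (bvsub (w s) us) = s * phi' s.
    rewrite /bvdot -/(sum2 _) (@sum2_one N m _ i).
      rewrite /phi' sumR_scal; apply: sumR_ext => l; rewrite Hus /bvsub /w; ring.
    move=> j Hj l; rewrite /bvsub /w Hd //; ring.
  have := pow2_ge_0 (bvnorm (bvsub (w s) us)).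
  move=> H1 H2.
  have : 0 <= s * phi' s by nra.
  move=> H3. apply: (Rmult_le_reg_l s); lra.
have [c [Hc1 Hc2]] := MVT_cor2 phi phi' 0 1 Rlt_0_1 (fun c _ => Hder c).
have E1 : phi 1 = h i (ssmap B v).
  rewrite /phi; congr (h i (ssmap B _)).
  apply functional_extensionality_dep => j; apply functional_extensionality => l.
  rewrite /w /d /bvsub; ring.
have E0 : phi 0 = h i (ssmap B us).
  rewrite /phi; congr (h i (ssmap B _)).
  apply functional_extensionality_dep => j; apply functional_extensionality => l.
  rewrite /w; ring.
have := Hpos c ltac:(lra).
rewrite -E1 -E0. nra.
Qed.
End Prob.

Set Implicit Arguments. Unset Strict Implicit.

Lemma abs_le_of_sq x b : x * x <= b * b -> 0 <= b -> Rabs x <= b.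
Proof. rewrite /Rabs; case: Rcase_abs => ? ? ?; nra. Qed.

Lemma lim_le (a : nat -> R) l b M K : Un_cv a l -> (forall p, Rabs (a (K + p)%nat - b) <= M) -> Rabs (l - b) <= M.
Proof.
move=> Hl Hb. apply: Rnot_lt_le => Hc.
have [N0 HN] := Hl (Rabs (l - b) - M) ltac:(lra).
have H1 := HN (N0 + K)%nat ltac:(lia). rewrite /Rdist in H1.
have H2 := Hb N0. rewrite (addnC K N0) in H2.
have H3 := Rabs_triang (l - a (N0 + K)%nat) (a (N0 + K)%nat - b).
have E : l - a (N0 + K)%nat + (a (N0 + K)%nat - b) = l - b by ring.
rewrite E (Rabs_minus_sym l (a _)) in H3. lra.
Qed.

Unset Implicit Arguments.
Section Exist.
Variables (N : nat) (m : 'I_N -> nat) (F : forall i : 'I_N, BV N m -> 'I_(m i) -> R).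
Variables (C mu : R).
Hypothesis Hmu : 0 < mu.
Hypothesis HC : 0 <= C.
Hypothesis Hlip : forall u v : BV N m, nsq (fun i l => F i u l - F i v l) <= C * nsq (bvsub u v).
Hypothesis Hmon : forall u v : BV N m,
      bvdot (fun i l => F i u l - F i v l) (bvsub u v) >= mu * nsq (bvsub u v).

Let C' := C + mu * mu + 1.
Let al := mu / C'.
Let q := 1 - mu * mu / C'.
Definition Tm (u : BV N m) : BV N m := fun i l => u i l - al * F i u l.

Lemma C'_pos : 0 < C'. Proof. rewrite /C'; nra. Qed.
Lemma q_bounds : 0 < q < 1.
Proof.
have H := C'_pos. rewrite /q; split.
  have : mu * mu / C' < 1.
    apply: (Rmult_lt_reg_r C') => //. have -> : mu * mu / C' * C' = mu * mu by field; lra.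
    rewrite /C'; lra.
  lra.
have : 0 < mu * mu / C' by apply: Rdiv_lt_0_compat; nra.
lra.
Qed.

Lemma Tm_contr u v : nsq (bvsub (Tm u) (Tm v)) <= q * nsq (bvsub u v).
Proof.
set d := bvsub u v. set D : BV N m := fun i l => F i u l - F i v l.
have E : nsq (bvsub (Tm u) (Tm v)) = nsq d + (-2 * al) * bvdot D d + (al * al) * nsq D.
  rewrite /nsq /bvdot -!/(sum2 _) !sum2_scal -!sum2_add. apply: sum2_ext => i l.
  rewrite /bvsub /Tm /D /d /bvsub; ring.
rewrite E.
have H1 := Hmon u v. have H2 := Hlip u v. rewrite -/d -/D in H1 H2.
have Hd := nsq_ge0 d.
have HC' := C'_pos.
have Hal : 0 < al by apply: Rdiv_lt_0_compat.
have H3 : (-2 * al) * bvdot D d <= (-2 * al) * (mu * nsq d) by nra.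
have H4 : (al * al) * nsq D <= (al * al) * (C * nsq d) by apply: Rmult_le_compat_l; nra.
apply: Rle_trans (_ : nsq d + (-2 * al) * (mu * nsq d) + (al * al) * (C * nsq d) <= _); first lra.
have -> : nsq d + -2 * al * (mu * nsq d) + al * al * (C * nsq d) = (1 - 2 * al * mu + al * al * C) * nsq d by ring.
apply: Rmult_le_compat_r => //.
rewrite /q /al.
have : mu * mu * C / (C' * C') <= mu * mu / C'.
  apply: (Rmult_le_reg_r (C' * C')); first nra.
  have -> : mu * mu * C / (C' * C') * (C' * C') = mu * mu * C by field; lra.
  have -> : mu * mu / C' * (C' * C') = mu * mu * C' by field; lra.
  apply: Rmult_le_compat_l; first nra. rewrite /C'; nra.
have -> : 1 - 2 * (mu / C') * mu + mu / C' * (mu / C') * C = 1 - 2 * (mu * mu / C') + mu * mu * C / (C' * C') by field; lra.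
lra.
Qed.

Let u0 : BV N m := fun _ _ => 0.
Let us_ k := iter k Tm u0.
Let r := sqrt q.
Let D0 := nsq (bvsub (us_ 1) (us_ 0)).
Let sD := sqrt D0.

Lemma r_bounds : 0 < r < 1.
Proof.
have [h1 h2] := q_bounds. rewrite /r; split; first exact: sqrt_lt_R0.
rewrite -sqrt_1; apply: sqrt_lt_1_alt; lra.
Qed.

Lemma step_bound k : nsq (bvsub (us_ k.+1) (us_ k)) <= (r ^ k) * (r ^ k) * D0.
Proof.
elim: k => [|k IH]; first by (have -> : r ^ 0 * r ^ 0 * D0 = D0 by simpl; ring); apply: Rle_refl.
have -> : us_ k.+2 = Tm (us_ k.+1) by [].
have -> : us_ k.+1 = Tm (us_ k) by [].
apply: Rle_trans (Tm_contr _ _) _.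
have Hq : q = r * r by rewrite /r sqrt_sqrt //; have := q_bounds; lra.
have -> : r ^ k.+1 * r ^ k.+1 * D0 = q * (r ^ k * r ^ k * D0) by rewrite Hq /=; ring.
apply: Rmult_le_compat_l; first by have := q_bounds; lra.
exact: IH.
Qed.

Lemma comp_step k i l : Rabs (us_ k.+1 i l - us_ k i l) <= r ^ k * sD.
Proof.
have HD0 : 0 <= D0 by apply: nsq_ge0.
have Hr := r_bounds.
apply: abs_le_of_sq.
  have H1 := comp_le_nsq (bvsub (us_ k.+1) (us_ k)) l.
  have H2 := step_bound k. rewrite /bvsub in H1 H2.
  have -> : r ^ k * sD * (r ^ k * sD) = r ^ k * r ^ k * (sD * sD) by ring.
  by rewrite /sD sqrt_sqrt //; lra.
apply: Rmult_le_pos; first by apply: pow_le; lra.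
exact: sqrt_pos.
Qed.

Lemma comp_cauchy k p i l : Rabs (us_ (k + p)%nat i l - us_ k i l) <= sD * r ^ k / (1 - r).
Proof.
have Hr := r_bounds. have HsD := sqrt_pos D0. rewrite -/sD in HsD.
have Hrk : 0 <= r ^ k by apply: pow_le; lra.
suff : Rabs (us_ (k + p)%nat i l - us_ k i l) <= sD * r ^ k * (1 - r ^ p) / (1 - r).
  move=> H; apply: Rle_trans H _.
  have Hrp : 0 <= r ^ p by apply: pow_le; lra.
  apply: Rmult_le_compat_r; first by apply: Rlt_le; apply: Rinv_0_lt_compat; lra.
  have HX : 0 <= sD * r ^ k * r ^ p by apply: Rmult_le_pos => //; apply: Rmult_le_pos.
  have -> : sD * r ^ k * (1 - r ^ p) = sD * r ^ k - sD * r ^ k * r ^ p by ring. lra.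
elim: p => [|p IH].
  rewrite addn0 Rminus_diag Rabs_R0 /=. have -> : sD * r ^ k * (1 - 1) / (1 - r) = 0 by field; lra. lra.
have := comp_step (k + p) i l. rewrite addnS.
have := Rabs_triang (us_ (k + p).+1 i l - us_ (k + p)%nat i l) (us_ (k + p)%nat i l - us_ k i l).
have -> : us_ (k + p).+1 i l - us_ (k + p)%nat i l + (us_ (k + p)%nat i l - us_ k i l) = us_ (k + p).+1 i l - us_ k i l by ring.
rewrite pow_add.
have -> : sD * r ^ k * (1 - r ^ p.+1) / (1 - r) = sD * r ^ k * (1 - r ^ p) / (1 - r) + r ^ k * r ^ p * sD
  by rewrite /=; field; lra.
lra.
Qed.

Lemma exists_zero : exists us : BV N m, forall i l, F i us l = 0.
Proof.
have Hr := r_bounds. have HsD := sqrt_pos D0. rewrite -/sD in HsD.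
have Hcauchy : forall i l, Cauchy_crit (fun k => us_ k i l).
  move=> i l eps Heps.
  have [K HK] := pow_lt_1_zero r ltac:(rewrite Rabs_pos_eq; lra) (eps * (1 - r) / (2 * (sD + 1)))
     ltac:(apply: Rdiv_lt_0_compat; nra).
  exists K => a b Ha Hb. rewrite /Rdist.
  have Ea : a = (K + (a - K))%nat by lia. have Eb : b = (K + (b - K))%nat by lia.
  have H1 := comp_cauchy K (a - K) i l. have H2 := comp_cauchy K (b - K) i l.
  rewrite -Ea in H1. rewrite -Eb in H2.
  have := Rabs_triang (us_ a i l - us_ K i l) (us_ K i l - us_ b i l).
  have -> : us_ a i l - us_ K i l + (us_ K i l - us_ b i l) = us_ a i l - us_ b i l by ring.
  rewrite (Rabs_minus_sym (us_ K i l)).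
  have HrK := HK K (le_n K). rewrite Rabs_pos_eq in HrK; last by apply: pow_le; lra.
  have : sD * r ^ K / (1 - r) < eps / 2.
    apply: (Rmult_lt_reg_r (1 - r)); first lra.
    have -> : sD * r ^ K / (1 - r) * (1 - r) = sD * r ^ K by field; lra.
    have Hrk : 0 <= r ^ K by apply: pow_le; lra.
    have : sD * r ^ K <= (sD + 1) * r ^ K by nra.
    have : (sD + 1) * r ^ K < (sD + 1) * (eps * (1 - r) / (2 * (sD + 1))) by apply: Rmult_lt_compat_l; lra.
    have -> : (sD + 1) * (eps * (1 - r) / (2 * (sD + 1))) = eps / 2 * (1 - r) by field; lra.
    lra.
  lra.
pose ust : BV N m := fun i l => proj1_sig (R_complete _ (Hcauchy i l)).
have Hlim : forall K i l, Rabs (ust i l - us_ K i l) <= sD * r ^ K / (1 - r).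
  move=> K i l. apply: (@lim_le (fun k => us_ k i l) _ _ _ K).
    exact: (proj2_sig (R_complete _ (Hcauchy i l))).
  move=> p; exact: comp_cauchy.
set M := sum2 (fun (i : 'I_N) (_ : 'I_(m i)) => 1).
have HM : 0 <= M by apply: sum2_ge0 => *; lra.
have [h1 h2] := q_bounds.
have Hsmall : forall K, nsq (bvsub (Tm ust) ust) <= (2 * q + 2) * ((sD * r ^ K / (1 - r)) * (sD * r ^ K / (1 - r)) * M).
  move=> K.
  have E : nsq (bvsub (Tm ust) ust) = nsq (fun (i : 'I_N) (l : 'I_(m i)) => bvsub (Tm ust) (Tm (us_ K)) l + bvsub (us_ K.+1) ust l).
    apply: nsq_ext => i l. rewrite /bvsub. have -> : us_ K.+1 = Tm (us_ K) by []. ring.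
  rewrite E. apply: Rle_trans (nsq_add2 _ _) _.
  have A1 : nsq (bvsub (Tm ust) (Tm (us_ K))) <= q * ((sD * r ^ K / (1 - r)) * (sD * r ^ K / (1 - r)) * M).
    apply: Rle_trans (Tm_contr _ _) _. apply: Rmult_le_compat_l; first lra.
    apply: nsq_bound => i l. rewrite /bvsub. exact: Hlim.
  have A2 : nsq (bvsub (us_ K.+1) ust) <= (sD * r ^ K / (1 - r)) * (sD * r ^ K / (1 - r)) * M.
    apply: nsq_bound => i l. rewrite /bvsub Rabs_minus_sym.
    apply: Rle_trans (Hlim K.+1 i l) _.
    apply: Rmult_le_compat_r; first by apply: Rlt_le; apply: Rinv_0_lt_compat; lra.
    apply: Rmult_le_compat_l => //. rewrite /=.
    have : 0 <= r ^ K by apply: pow_le; lra.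
    nra.
  lra.
have Hzero : nsq (bvsub (Tm ust) ust) = 0.
  apply: Rle_antisym; last exact: nsq_ge0.
  apply: Rnot_lt_le => Hp.
  set A := (2 * q + 2) * ((sD + 1) / (1 - r)) * ((sD + 1) / (1 - r)) * (M + 1).
  have HA : 0 < A.
    rewrite /A. have : 0 < (sD + 1) / (1 - r) by apply: Rdiv_lt_0_compat; lra.
    move=> ?; apply: Rmult_lt_0_compat; last lra. apply: Rmult_lt_0_compat => //.
    apply: Rmult_lt_0_compat => //; lra.
  set y := Rmin 1 (nsq (bvsub (Tm ust) ust) / (2 * A)).
  have Hy : 0 < y by apply: Rmin_pos; [lra | apply: Rdiv_lt_0_compat; lra].
  have [K HK] := pow_lt_1_zero r ltac:(rewrite Rabs_pos_eq; lra) y Hy.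
  have HrK := HK K (le_n K). rewrite Rabs_pos_eq in HrK; last by apply: pow_le; lra.
  have Hrk : 0 <= r ^ K by apply: pow_le; lra.
  have := Hsmall K.
  have Hy1 := Rmin_l 1 (nsq (bvsub (Tm ust) ust) / (2 * A)).
  have Hy2 := Rmin_r 1 (nsq (bvsub (Tm ust) ust) / (2 * A)). rewrite -/y in Hy1 Hy2.
  have Hb : (2 * q + 2) * (sD * r ^ K / (1 - r) * (sD * r ^ K / (1 - r)) * M) <= A * (r ^ K * r ^ K).
    rewrite /A.
    have -> : sD * r ^ K / (1 - r) = (sD / (1 - r)) * r ^ K by field; lra.
    have H0 : 0 <= sD / (1 - r) by apply: Rmult_le_pos => //; apply: Rlt_le; apply: Rinv_0_lt_compat; lra.
    have H1 : sD / (1 - r) <= (sD + 1) / (1 - r).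
      apply: Rmult_le_compat_r; first by apply: Rlt_le; apply: Rinv_0_lt_compat; lra. lra.
    have H2 : sD / (1 - r) * (sD / (1 - r)) <= (sD + 1) / (1 - r) * ((sD + 1) / (1 - r)) by apply: Rmult_le_compat.
    have H3 : 0 <= r ^ K * r ^ K by nra.
    have H4 : 0 <= sD / (1 - r) * (sD / (1 - r)) by nra.
    have -> : (2 * q + 2) * (sD / (1 - r) * r ^ K * (sD / (1 - r) * r ^ K) * M) =
      (2 * q + 2) * ((sD / (1 - r) * (sD / (1 - r))) * M * (r ^ K * r ^ K)) by ring.
    have -> : (2 * q + 2) * ((sD + 1) / (1 - r)) * ((sD + 1) / (1 - r)) * (M + 1) * (r ^ K * r ^ K) =
      (2 * q + 2) * (((sD + 1) / (1 - r)) * ((sD + 1) / (1 - r)) * (M + 1) * (r ^ K * r ^ K)) by ring.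
    apply: Rmult_le_compat_l; first lra.
    apply: Rmult_le_compat_r => //. apply: Rmult_le_compat => //; lra.
  have : r ^ K * r ^ K <= y.
    have : r ^ K <= 1 by lra. move=> ?. nra.
  have : A * y <= nsq (bvsub (Tm ust) ust) / 2.
    have : A * y <= A * (nsq (bvsub (Tm ust) ust) / (2 * A)) by apply: Rmult_le_compat_l; lra.
    have -> : A * (nsq (bvsub (Tm ust) ust) / (2 * A)) = nsq (bvsub (Tm ust) ust) / 2 by field; lra.
    lra.
  move=> H5 H6 H7.
  have : A * (r ^ K * r ^ K) <= A * y by apply: Rmult_le_compat_l; lra.
  lra.
exists ust => i l.
have := comp_le_nsq (bvsub (Tm ust) ust) l. rewrite Hzero /bvsub /Tm.
have -> : ust i l - al * F i ust l - ust i l = - al * F i ust l by ring.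
move=> H.
have Hal : 0 < al by apply: Rdiv_lt_0_compat => //; exact: C'_pos.
have H0 : (- al * F i ust l) * (- al * F i ust l) = 0 by have := Rle_0_sqr (- al * F i ust l); rewrite /Rsqr; lra.
case: (Rmult_integral _ _ H0) => H1; case: (Rmult_integral _ _ H1); lra.
Qed.
End Exist.

Set Implicit Arguments.
Lemma dl_plus f g t a b : derivable_pt_lim f t a -> derivable_pt_lim g t b ->
  derivable_pt_lim (fun s => f s + g s) t (a + b).
Proof. exact: derivable_pt_lim_plus. Qed.
Lemma dl_minus f g t a b : derivable_pt_lim f t a -> derivable_pt_lim g t b ->
  derivable_pt_lim (fun s => f s - g s) t (a - b).
Proof. exact: derivable_pt_lim_minus. Qed.
Lemma dl_scal c f t a : derivable_pt_lim f t a -> derivable_pt_lim (fun s => c * f s) t (c * a).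
Proof. exact: derivable_pt_lim_scal. Qed.
Lemma dl_const c t : derivable_pt_lim (fun _ => c) t 0.
Proof. exact: derivable_pt_lim_const. Qed.
Lemma dl_sq f t a : derivable_pt_lim f t a -> derivable_pt_lim (fun s => f s * f s) t (2 * f t * a).
Proof.
move=> H. have := derivable_pt_lim_mult _ _ _ _ _ H H.
have -> : a * f t + f t * a = 2 * f t * a by ring. by [].
Qed.
Lemma dl_eq f t a b : derivable_pt_lim f t a -> a = b -> derivable_pt_lim f t b.
Proof. by move=> H <-. Qed.
Lemma dl_sumR n (f : 'I_n -> R -> R) (f' : 'I_n -> R) t :
  (forall k, derivable_pt_lim (f k) t (f' k)) ->
  derivable_pt_lim (fun s => sumR (fun k => f k s)) t (sumR f').
Proof.
elim: n f f' => [|n IH] f f' H.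
  have -> : (fun s => sumR (fun k => f k s)) = (fun _ => 0).
    by apply functional_extensionality => s; rewrite sumR_nil.
  rewrite sumR_nil; exact: dl_const.
have -> : (fun s => sumR (fun k => f k s)) = (fun s => sumR (fun k => f (widen_ord (leqnSn n) k) s) + f ord_max s).
  by apply functional_extensionality => s; rewrite sumR_recr.
rewrite sumR_recr. apply: dl_plus; last exact: H.
apply: (IH (fun k => f (widen_ord (leqnSn n) k))) => k; exact: H.
Qed.

Lemma bvconv_of N d (z : R -> BV N d) (zs : BV N d) K0 kp : 0 < kp -> 0 <= K0 ->
  (forall t, 1 <= t -> nsq (bvsub (z t) zs) <= K0 / (1 + kp * t)) -> bv_conv z zs.
Proof.
move=> Hk HK H eps Heps.
have He2 : 0 < eps * eps by nra.
have Hq : 0 <= K0 / (kp * (eps * eps)).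
  apply: Rmult_le_pos => //; apply: Rlt_le; apply: Rinv_0_lt_compat; nra.
exists (1 + K0 / (kp * (eps * eps))) => t Ht.
have Ht1 : 1 <= t by lra.
have Hb := H t Ht1.
have Hn := nsq_ge0 (bvsub (z t) zs).
have Hlt : K0 / (1 + kp * t) < eps * eps.
  apply: (Rmult_lt_reg_r (1 + kp * t)); first nra.
  have -> : K0 / (1 + kp * t) * (1 + kp * t) = K0 by field; nra.
  have : kp * (eps * eps) * (K0 / (kp * (eps * eps))) = K0 by field; lra.
  have : kp * (eps * eps) * (K0 / (kp * (eps * eps))) <= kp * (eps * eps) * t.
    apply: Rmult_le_compat_l; nra.
  nra.
rewrite /bvnorm -(sqrt_square eps); last lra.
apply: sqrt_lt_1_alt. rewrite -/(nsq _). lra.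
Qed.

Unset Implicit Arguments.
Section Conv.
Variables (N : nat) (n m : 'I_N -> nat) (B : forall i : 'I_N, 'I_(n i) -> 'I_(m i) -> R).
Variable Fx : forall i : 'I_N, BV N n -> 'I_(n i) -> R.
Variable L : 'I_N -> R.
Hypothesis HL : forall i x y, vnorm (fun k => Fx i x k - Fx i y k) <= L i * bvnorm (bvsub x y).
Variables (mu : R) (us : BV N m).
Hypothesis Hmu : 0 < mu.
Let G x := Gx N n m B Fx x.
Hypothesis Hmon : forall u, bvdot (fun i l => G (ssmap B u) i l - G (ssmap B us) i l) (bvsub u us) >= mu * nsq (bvsub u us).
Hypothesis Hus : forall i l, G (ssmap B us) i l = 0.

Definition Lam := KT N n m B * Lx N L.
Definition KPc := KP N n m B.
Definition cc := 2 * Lam / mu + 1.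
Definition AA := 2 * KPc * Lam.
Definition taustar := 4 * AA + 2 * cc * AA * KPc / mu + 1.

Lemma Lam_ge0 : 0 <= Lam.
Proof. apply: Rmult_le_pos; [exact: KT_ge0 | exact: Lx_ge0]. Qed.
Lemma KPc_ge0 : 0 <= KPc. Proof. exact: KP_ge0. Qed.
Lemma cc_pos : 0 < cc.
Proof. have := Lam_ge0. rewrite /cc => H. have : 0 <= 2 * Lam / mu by apply: Rmult_le_pos; [lra | apply: Rlt_le; apply: Rinv_0_lt_compat]. lra. Qed.
Lemma AA_ge0 : 0 <= AA.
Proof. rewrite /AA. have := Lam_ge0. have := KPc_ge0. nra. Qed.
Lemma taustar_ge1 : 1 <= taustar.
Proof.
rewrite /taustar. have := AA_ge0. have := cc_pos. have := KPc_ge0. move=> h1 h2 h3.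
have : 0 <= 2 * cc * AA * KPc / mu.
  apply: Rmult_le_pos; last by apply: Rlt_le; apply: Rinv_0_lt_compat.
  apply: Rmult_le_pos => //. apply: Rmult_le_pos => //; lra.
lra.
Qed.

Definition wv (uu : BV N m) : BV N m := bvsub uu us.
Definition ev (xx : BV N n) (uu : BV N m) : BV N n := fun i k => xx i k - ssmap B uu i k.
Definition udv (tau : 'I_N -> R) (xx : BV N n) : BV N m := fun i l => - / tau i * G xx i l.
Definition edv tau xx uu : BV N n := fun i k => (- xx i k + ssmap B uu i k) - ssmap B (udv tau xx) i k.
Definition Vf (tau : 'I_N -> R) xx uu :=
  sumR (fun i => tau i * sumR (fun l => wv uu i l * wv uu i l)) + cc * nsq (ev xx uu).
Definition Vd (tau : 'I_N -> R) xx uu :=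
  sumR (fun i => tau i * sumR (fun l => 2 * wv uu i l * udv tau xx i l))
  + cc * sum2 (fun i k => 2 * ev xx uu i k * edv tau xx uu i k).

Lemma Vd_bound tau (Htau : forall i, taustar <= tau i) xx uu :
  Vd tau xx uu <= - (mu / 2) * nsq (wv uu) - (cc / 4) * nsq (ev xx uu).
Proof.
have Hts := taustar_ge1.
have Htp : forall i, 0 < tau i by move=> i; have := Htau i; lra.
set W := nsq (wv uu). set E := nsq (ev xx uu).
have HW : 0 <= W by apply: nsq_ge0.
have HE : 0 <= E by apply: nsq_ge0.
have P1e : sumR (fun i => tau i * sumR (fun l => 2 * wv uu i l * udv tau xx i l))
    = -2 * bvdot (fun i l => G (ssmap B uu) i l - G (ssmap B us) i l) (wv uu)
      + -2 * bvdot (wv uu) (fun i l => G xx i l - G (ssmap B uu) i l).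
  rewrite /bvdot -!/(sum2 _) !sum2_scal -sum2_add /sum2; apply: sumR_ext => i.
  rewrite sumR_scal; apply: sumR_ext => l. rewrite /udv Hus.
  have := Htp i. move=> h. field. lra.
have Hm := Hmon uu. rewrite -/(wv uu) -/W in Hm.
have Hy := young (wv uu) (fun i l => - (G xx i l - G (ssmap B uu) i l)) Hmu.
have Ebd : bvdot (wv uu) (fun i l => - (G xx i l - G (ssmap B uu) i l)) =
   - bvdot (wv uu) (fun i l => G xx i l - G (ssmap B uu) i l).
  apply: (Rplus_eq_reg_l (bvdot (wv uu) (fun i l => G xx i l - G (ssmap B uu) i l))).
  rewrite Rplus_opp_r /bvdot -!/(sum2 _) -sum2_add /sum2.
  apply: sumR_0 => i; apply: sumR_0 => l; ring.
have End : nsq (fun i l => - (G xx i l - G (ssmap B uu) i l)) = nsq (fun i l => G xx i l - G (ssmap B uu) i l).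
  apply: sum2_ext => i l; ring.
have HD : nsq (fun i l => G xx i l - G (ssmap B uu) i l) <= Lam * E.
  apply: Rle_trans (Gx_lip N n m B Fx L HL xx (ssmap B uu)) _.
  rewrite /Lam. apply: Rmult_le_compat_l.
    apply: Rmult_le_pos; [exact: KT_ge0 | exact: Lx_ge0].
  by rewrite /E; apply: Req_le; apply: nsq_ext => i k.
rewrite Ebd End -/W in Hy.
have Hinvmu : 0 < / mu by apply: Rinv_0_lt_compat.
have P1 : sumR (fun i => tau i * sumR (fun l => 2 * wv uu i l * udv tau xx i l)) <= - mu * W + (Lam / mu) * E.
  rewrite P1e.
  have : / mu * nsq (fun i l => G xx i l - G (ssmap B uu) i l) <= / mu * (Lam * E) by apply: Rmult_le_compat_l; lra.
  rewrite /Rdiv. lra.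
set ud : BV N m := udv tau xx.
have P2e : sum2 (fun i k => 2 * ev xx uu i k * edv tau xx uu i k) = -2 * E + 2 * bvdot (ev xx uu) (fun i k => - ssmap B ud i k).
  rewrite /E /nsq /bvdot -!/(sum2 _) !sum2_scal -sum2_add; apply: sum2_ext => i k.
  rewrite /edv /ev -/ud; ring.
have Hy2 := young (ev xx uu) (fun i k => - ssmap B ud i k) Rlt_0_1.
have En2 : nsq (fun i k => - ssmap B ud i k) = nsq (ssmap B ud) by apply: sum2_ext => i k; ring.
rewrite En2 -/E Rinv_1 in Hy2.
have Hud : nsq ud <= / (taustar * taustar) * nsq (G xx).
  rewrite /nsq /bvdot -!/(sum2 _) sum2_scal; apply: sum2_le => i l.
  rewrite /ud /udv.
  have h1 := Htp i. have h2 := Htau i.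
  have : / tau i * / tau i <= / (taustar * taustar).
    rewrite -Rinv_mult. apply: Rinv_le_contravar; first nra. nra.
  have := Rle_0_sqr (G xx i l). rewrite /Rsqr => h3 h4.
  have -> : - / tau i * G xx i l * (- / tau i * G xx i l) = (/ tau i * / tau i) * (G xx i l * G xx i l) by ring.
  apply: Rmult_le_compat_r => //.
have HG : nsq (G xx) <= Lam * (2 * E + 2 * KPc * W).
  have -> : nsq (G xx) = nsq (fun i l => G xx i l - G (ssmap B us) i l) by apply: nsq_ext => i l; rewrite Hus; ring.
  apply: Rle_trans (Gx_lip N n m B Fx L HL xx (ssmap B us)) _.
  rewrite -/Lam. apply: Rmult_le_compat_l; first exact: Lam_ge0.
  have -> : nsq (bvsub xx (ssmap B us)) = nsq (fun i k => ev xx uu i k + ssmap B (wv uu) i k).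
    apply: nsq_ext => i k. rewrite /ev /wv /bvsub.
    have := ssmap_lin N n m B 1 (-1) uu us i k.
    have -> : (fun j l => 1 * uu j l + -1 * us j l) = (fun j l => uu j l - us j l).
      apply functional_extensionality_dep => j; apply functional_extensionality => l; ring.
    move=> ->; ring.
  apply: Rle_trans (nsq_add2 _ _) _.
  have := ssmap_bound N n m B (wv uu). rewrite -/KPc -/W -/E. lra.
have Hpi := ssmap_bound N n m B ud. rewrite -/KPc in Hpi.
have HKP := KPc_ge0. have HL0 := Lam_ge0. have Hcc := cc_pos.
have HA := AA_ge0.
set it := / (taustar * taustar).
have Hit : 0 < it by apply: Rinv_0_lt_compat; nra.
have Hitt : it * (taustar * taustar) = 1 by rewrite /it; field; lra.
have P2 : sum2 (fun i k => 2 * ev xx uu i k * edv tau xx uu i k) <= - E + KPc * it * Lam * (2 * E + 2 * KPc * W).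
  rewrite P2e.
  have : KPc * nsq ud <= KPc * (it * nsq (G xx)) by apply: Rmult_le_compat_l.
  have : KPc * it * nsq (G xx) <= KPc * it * (Lam * (2 * E + 2 * KPc * W)) by apply: Rmult_le_compat_l; nra.
  have -> : KPc * it * Lam * (2 * E + 2 * KPc * W) = KPc * it * (Lam * (2 * E + 2 * KPc * W)) by ring.
  have -> : KPc * (it * nsq (G xx)) = KPc * it * nsq (G xx) by ring.
  lra.
have h0 : 0 <= 2 * cc * AA * KPc / mu.
  apply: Rmult_le_pos; last by apply: Rlt_le.
  apply: Rmult_le_pos => //. apply: Rmult_le_pos => //; lra.
have Hts2 : taustar <= taustar * taustar.
  have := Rmult_le_compat_r taustar 1 taustar ltac:(lra) Hts. lra.
have Hdelta : AA * it <= 1 / 4.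
  have : 4 * AA <= taustar * taustar by rewrite /taustar in Hts Hts2 *; lra.
  move=> h. have : 4 * AA * it <= taustar * taustar * it by apply: Rmult_le_compat_r; lra.
  lra.
have Hdelta2 : cc * AA * it * KPc <= mu / 2.
  have h1 : 2 * cc * AA * KPc / mu <= taustar by rewrite /taustar; lra.
  have h2 : 2 * cc * AA * KPc / mu <= taustar * taustar by lra.
  have h3 : 2 * cc * AA * KPc / mu * it <= 1.
    rewrite -Hitt. have := Rmult_le_compat_r it _ _ (Rlt_le _ _ Hit) h2. lra.
  have -> : cc * AA * it * KPc = mu / 2 * (2 * cc * AA * KPc / mu * it) by field; lra.
  have : 0 < mu / 2 by lra. move=> h4.
  have := Rmult_le_compat_l (mu / 2) _ _ (Rlt_le _ _ h4) h3. lra.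
rewrite /Vd.
have E1 : cc * (KPc * it * Lam * (2 * E + 2 * KPc * W)) = (AA * it) * cc * E + (cc * AA * it * KPc) * W.
  rewrite /AA; ring.
have : cc * sum2 (fun i k => 2 * ev xx uu i k * edv tau xx uu i k) <= cc * (- E + KPc * it * Lam * (2 * E + 2 * KPc * W)).
  by apply: Rmult_le_compat_l; lra.
rewrite Rmult_plus_distr_l E1.
have : AA * it * cc * E <= 1 / 4 * cc * E.
  apply: Rmult_le_compat_r => //. apply: Rmult_le_compat_r; lra.
have : cc * AA * it * KPc * W <= mu / 2 * W by apply: Rmult_le_compat_r.
have : Lam / mu * E <= (cc / 2) * E.
  apply: Rmult_le_compat_r => //. rewrite /cc. lra.
lra.
Qed.

Section ODE.
Variable tau : 'I_N -> R.
Hypothesis Htau : forall i, taustar <= tau i.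
Variables (x : R -> BV N n) (u : R -> BV N m).
Hypothesis Hode : forall t, 0 < t ->
         (forall i k, derivable_pt_lim (fun s => x s i k) t
                        (- x t i k + sumR (fun l => B i k l * u t i l))) /\
         (forall i l, derivable_pt_lim (fun s => u s i l) t
                        (- / tau i * sumR (fun k => B i k l * Fx i (x t) k))).

Lemma Vder t : 0 < t -> derivable_pt_lim (fun s => Vf tau (x s) (u s)) t (Vd tau (x t) (u t)).
Proof.
move=> Ht. have [Hx Hu] := Hode t Ht.
rewrite /Vf /Vd. apply: dl_plus.
  apply (@dl_sumR _ (fun i s => tau i * sumR (fun l => wv (u s) i l * wv (u s) i l))) => i.
  apply: dl_scal.
  apply (@dl_sumR _ (fun l s => wv (u s) i l * wv (u s) i l)) => l.
  apply: (dl_sq (f := fun s => wv (u s) i l)).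
  apply: dl_eq; first exact: (dl_minus (Hu i l) (dl_const (us i l) t)).
  rewrite /udv /G /Gx; ring.
apply: dl_scal.
apply (@dl_sumR _ (fun i s => sumR (fun k => ev (x s) (u s) i k * ev (x s) (u s) i k))) => i.
apply (@dl_sumR _ (fun k s => ev (x s) (u s) i k * ev (x s) (u s) i k)) => k.
apply: (dl_sq (f := fun s => ev (x s) (u s) i k)).
apply: dl_eq.
  apply: (dl_minus (Hx i k)).
  apply (@dl_sumR _ (fun l s => B i k l * u s i l)) => l.
  apply: dl_scal. exact: Hu.
rewrite /edv /ssmap /udv /G /Gx. ring.
Qed.

Definition Ttot := sumR tau + 1.
Definition kap := Rmin (mu / (2 * Ttot)) (1 / 4).
Lemma tau_pos i : 0 < tau i.
Proof. have := Htau i. have := taustar_ge1. lra. Qed.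
Lemma Ttot_pos : 0 < Ttot.
Proof. rewrite /Ttot. have : 0 <= sumR tau by apply: sumR_ge0 => i; apply: Rlt_le; exact: tau_pos. lra. Qed.
Lemma kap_pos : 0 < kap.
Proof. apply: Rmin_pos; last lra. apply: Rdiv_lt_0_compat => //. have := Ttot_pos; lra. Qed.

Lemma Vf_parts (xx : BV N n) (uu : BV N m) :
  0 <= sumR (fun i => tau i * sumR (fun l => wv uu i l * wv uu i l)) /\
  taustar * nsq (wv uu) <= sumR (fun i => tau i * sumR (fun l => wv uu i l * wv uu i l)) /\
  sumR (fun i => tau i * sumR (fun l => wv uu i l * wv uu i l)) <= Ttot * nsq (wv uu).
Proof.
have Hi : forall i, 0 <= sumR (fun l => wv uu i l * wv uu i l) by move=> i; apply: sumR_ge0 => l; exact: Rle_0_sqr.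
have Htp := tau_pos.
split; first by apply: sumR_ge0 => i; apply: Rmult_le_pos; [apply: Rlt_le; exact: Htp | exact: Hi].
split.
  rewrite /nsq /bvdot sumR_scal; apply: sumR_le => i. apply: Rmult_le_compat_r; [exact: Hi | exact: Htau].
rewrite /nsq /bvdot sumR_scal; apply: sumR_le => i. apply: Rmult_le_compat_r; first exact: Hi.
rewrite /Ttot.
have := @sumR_term _ tau i (fun j => Rlt_le _ _ (Htp j)). lra.
Qed.

Lemma Vd_decay (xx : BV N n) (uu : BV N m) : Vd tau xx uu <= - kap * Vf tau xx uu.
Proof.
have H := Vd_bound tau Htau xx uu.
have [_ [_ H3]] := Vf_parts xx uu.
have HW := nsq_ge0 (wv uu). have HE := nsq_ge0 (ev xx uu).
have Hk := kap_pos. have HT := Ttot_pos. have Hc := cc_pos.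
have Hk1 : kap * Ttot <= mu / 2.
  have := Rmin_l (mu / (2 * Ttot)) (1 / 4). rewrite -/kap => h.
  have := Rmult_le_compat_r Ttot _ _ (Rlt_le _ _ HT) h.
  have -> : mu / (2 * Ttot) * Ttot = mu / 2 by field; lra. by [].
have Hk2 : kap <= 1 / 4 by apply: Rmin_r.
rewrite /Vf.
have : kap * sumR (fun i => tau i * sumR (fun l => wv uu i l * wv uu i l)) <= kap * (Ttot * nsq (wv uu))
  by apply: Rmult_le_compat_l; lra.
have : kap * Ttot * nsq (wv uu) <= mu / 2 * nsq (wv uu) by apply: Rmult_le_compat_r.
have : kap * (cc * nsq (ev xx uu)) <= 1 / 4 * (cc * nsq (ev xx uu)) by apply: Rmult_le_compat_r; nra.
have -> : kap * (Ttot * nsq (wv uu)) = kap * Ttot * nsq (wv uu) by ring.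
lra.
Qed.

Lemma Vf_ge0 (xx : BV N n) (uu : BV N m) : 0 <= Vf tau xx uu.
Proof.
have [H1 _] := Vf_parts xx uu. have := nsq_ge0 (ev xx uu). have := cc_pos. rewrite /Vf. nra.
Qed.

Lemma decay t : 1 <= t -> Vf tau (x t) (u t) * exp (kap * t) <= Vf tau (x 1) (u 1) * exp (kap * 1).
Proof.
move=> Ht. case: (Req_dec t 1) => [->|Hne]; first lra.
pose Phi := fun s => Vf tau (x s) (u s) * exp (kap * s).
pose Phi' := fun s => Vd tau (x s) (u s) * exp (kap * s) + Vf tau (x s) (u s) * (exp (kap * s) * kap).
have Hder : forall c, 1 <= c <= t -> derivable_pt_lim Phi c (Phi' c).
  move=> c Hc. have Hc0 : 0 < c by lra.
  apply: (derivable_pt_lim_mult (fun s => Vf tau (x s) (u s)) (fun s => exp (kap * s))).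
    exact: Vder.
  have := derivable_pt_lim_comp (fun s => kap * s) exp c kap (exp (kap * c)).
  apply.
    apply: dl_eq; first exact: (dl_scal kap (derivable_pt_lim_id c)). ring.
  exact: derivable_pt_lim_exp.
have [c [Hc1 Hc2]] := MVT_cor2 Phi Phi' 1 t ltac:(lra) Hder.
have : Phi' c <= 0.
  rewrite /Phi'. have := Vd_decay (x c) (u c). have := exp_pos (kap * c).
  have := Vf_ge0 (x c) (u c). move=> h1 h2 h3.
  have -> : Vd tau (x c) (u c) * exp (kap * c) + Vf tau (x c) (u c) * (exp (kap * c) * kap)
    = exp (kap * c) * (Vd tau (x c) (u c) + kap * Vf tau (x c) (u c)) by ring.
  have : Vd tau (x c) (u c) + kap * Vf tau (x c) (u c) <= 0 by lra.
  move=> h4. have := Rmult_le_compat_l _ _ _ (Rlt_le _ _ h2) h4. lra.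
move=> h. rewrite /Phi in Hc1.
have Ht1 : 0 <= t - 1 by lra.
have := Rmult_le_compat_r (t - 1) _ _ Ht1 h. rewrite Rmult_0_l => h5.
lra.
Qed.

Lemma Vbound t : 1 <= t -> Vf tau (x t) (u t) <= (Vf tau (x 1) (u 1) * exp kap) / (1 + kap * t).
Proof.
move=> Ht. have Hk := kap_pos.
have H := decay t Ht. rewrite Rmult_1_r in H.
have He : 1 + kap * t < exp (kap * t) by apply: exp_ineq1; nra.
have Hv := Vf_ge0 (x t) (u t).
apply: (Rmult_le_reg_r (1 + kap * t)); first nra.
have -> : Vf tau (x 1) (u 1) * exp kap / (1 + kap * t) * (1 + kap * t) = Vf tau (x 1) (u 1) * exp kap by field; nra.
apply: Rle_trans H. apply: Rmult_le_compat_l => //; lra.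
Qed.

Lemma conv_final : bv_conv x (ssmap B us) /\ bv_conv u us.
Proof.
set Phi1 := Vf tau (x 1) (u 1) * exp kap.
have HPhi : 0 <= Phi1 by apply: Rmult_le_pos; [exact: Vf_ge0 | apply: Rlt_le; exact: exp_pos].
have Hk := kap_pos. have Hts := taustar_ge1. have Hc := cc_pos. have HKP := KPc_ge0.
have HW : forall t, 1 <= t -> nsq (wv (u t)) <= (Phi1 / taustar) / (1 + kap * t).
  move=> t Ht. have := Vbound t Ht. rewrite -/Phi1.
  have [H1 [H2 _]] := Vf_parts (x t) (u t).
  have := nsq_ge0 (ev (x t) (u t)). rewrite /Vf => h1 h2.
  have h3 : taustar * nsq (wv (u t)) <= Phi1 / (1 + kap * t) by nra.
  apply: (Rmult_le_reg_l taustar); first lra.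
  have -> : taustar * (Phi1 / taustar / (1 + kap * t)) = Phi1 / (1 + kap * t) by field; nra.
  exact: h3.
have HE : forall t, 1 <= t -> nsq (ev (x t) (u t)) <= (Phi1 / cc) / (1 + kap * t).
  move=> t Ht. have := Vbound t Ht. rewrite -/Phi1.
  have [H1 [H2 _]] := Vf_parts (x t) (u t).
  have := nsq_ge0 (ev (x t) (u t)). rewrite /Vf => h1 h2.
  have h3 : cc * nsq (ev (x t) (u t)) <= Phi1 / (1 + kap * t) by nra.
  apply: (Rmult_le_reg_l cc); first lra.
  have -> : cc * (Phi1 / cc / (1 + kap * t)) = Phi1 / (1 + kap * t) by field; nra.
  exact: h3.
split.
  apply: (@bvconv_of N n x (ssmap B us) (2 * (Phi1 / cc) + 2 * KPc * (Phi1 / taustar)) kap Hk).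
    have : 0 <= Phi1 / cc by apply: Rmult_le_pos => //; apply: Rlt_le; apply: Rinv_0_lt_compat.
    have : 0 <= Phi1 / taustar by apply: Rmult_le_pos => //; apply: Rlt_le; apply: Rinv_0_lt_compat; lra.
    nra.
  move=> t Ht.
  have -> : nsq (bvsub (x t) (ssmap B us)) = nsq (fun i k => ev (x t) (u t) i k + ssmap B (wv (u t)) i k).
    apply: nsq_ext => i k. rewrite /ev /wv /bvsub.
    have := ssmap_lin N n m B 1 (-1) (u t) us i k.
    have -> : (fun j l => 1 * u t j l + -1 * us j l) = (fun j l => u t j l - us j l).
      apply functional_extensionality_dep => j; apply functional_extensionality => l; ring.
    move=> ->; ring.
  apply: Rle_trans (nsq_add2 _ _) _.
  have := ssmap_bound N n m B (wv (u t)). rewrite -/KPc.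
  have := HW t Ht. have := HE t Ht.
  have Hd : 0 < 1 + kap * t by nra.
  have -> : (2 * (Phi1 / cc) + 2 * KPc * (Phi1 / taustar)) / (1 + kap * t) =
     2 * (Phi1 / cc / (1 + kap * t)) + 2 * KPc * (Phi1 / taustar / (1 + kap * t)) by field; lra.
  move=> h1 h2 h3.
  have := Rmult_le_compat_l KPc _ _ HKP h2. lra.
apply: (@bvconv_of N m u us (Phi1 / taustar) kap Hk).
  by apply: Rmult_le_pos => //; apply: Rlt_le; apply: Rinv_0_lt_compat; lra.
exact: HW.
Qed.
End ODE.
End Conv.

Unset Implicit Arguments.

Theorem theorem1
  (N : nat) (n m : 'I_N -> nat)
  (B : forall i : 'I_N, 'I_(n i) -> 'I_(m i) -> R)
  (h : 'I_N -> BV N n -> R)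
  (Fx : forall i : 'I_N, BV N n -> 'I_(n i) -> R)
  (F : forall i : 'I_N, BV N m -> 'I_(m i) -> R)
  (Hdiff : forall i, PartialGrad (h i) i (Fx i))
  (Hlip : forall i, exists L, forall x y : BV N n,
      vnorm (fun k => Fx i x k - Fx i y k) <= L * bvnorm (bvsub x y))
  (HF : forall i, PartialGrad (fun u => h i (ssmap B u)) i (F i))
  (Hmon : exists mu, 0 < mu /\ forall u v : BV N m,
      bvdot (fun i l => F i u l - F i v l) (bvsub u v) >= mu * (bvnorm (bvsub u v))^2) :
  exists ustar : BV N m, NashEq B h ustar /\
  exists taustar, 0 < taustar /\
    forall tau : 'I_N -> R, (forall i, taustar <= tau i) ->
    forall (x : R -> BV N n) (u : R -> BV N m),
      (forall t, 0 < t ->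
         (forall i k, derivable_pt_lim (fun s => x s i k) t
                        (- x t i k + sumR (fun l => B i k l * u t i l))) /\
         (forall i l, derivable_pt_lim (fun s => u s i l) t
                        (- / tau i * sumR (fun k => B i k l * Fx i (x t) k)))) ->
      bv_conv x (ssmap B ustar) /\ bv_conv u ustar.
Proof.
pose L := fun i => proj1_sig (constructive_indefinite_description _ (Hlip i)).
have HL : forall i x y, vnorm (fun k => Fx i x k - Fx i y k) <= L i * bvnorm (bvsub x y).
  move=> i; exact: (proj2_sig (constructive_indefinite_description _ (Hlip i))).
have [mu [Hmu Hmon0]] := Hmon.
have HFeq : forall i u l, F i u l = Gx N n m B Fx (ssmap B u) i l.
  move=> i u l; exact: (F_eq N n m B Fx i (h i) (F i) (Hdiff i) (HF i) u l).
have Hmon1 : forall u v : BV N m,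
    bvdot (fun i l => F i u l - F i v l) (bvsub u v) >= mu * nsq (bvsub u v).
  move=> u v; rewrite -bvnorm_sq; exact: Hmon0.
have HKT := KT_ge0 N n m B. have HLx := Lx_ge0 N L. have HKP := KP_ge0 N n m B.
have Hlip1 : forall u v : BV N m, nsq (fun i l => F i u l - F i v l) <=
     (KT N n m B * Lx N L * KP N n m B) * nsq (bvsub u v).
  move=> u v.
  have -> : nsq (fun i l => F i u l - F i v l) =
     nsq (fun i l => Gx N n m B Fx (ssmap B u) i l - Gx N n m B Fx (ssmap B v) i l).
    by apply: nsq_ext => i l; rewrite !HFeq.
  apply: Rle_trans (Gx_lip N n m B Fx L HL _ _) _.
  rewrite [X in _ <= X]Rmult_assoc. apply: Rmult_le_compat_l; first by apply: Rmult_le_pos.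
  have -> : nsq (bvsub (ssmap B u) (ssmap B v)) = nsq (ssmap B (bvsub u v)).
    apply: nsq_ext => i k. rewrite /bvsub.
    have := ssmap_lin N n m B 1 (-1) u v i k.
    have -> : (fun j l => 1 * u j l + -1 * v j l) = bvsub u v.
      apply functional_extensionality_dep => j; apply functional_extensionality => l.
      rewrite /bvsub; ring.
    move=> ->; ring.
  exact: ssmap_bound.
have [us Hus] := exists_zero N m F (KT N n m B * Lx N L * KP N n m B) mu Hmu
   ltac:(apply: Rmult_le_pos => //; apply: Rmult_le_pos => //) Hlip1 Hmon1.
exists us. split; first exact: (nash N n m B h F HF mu Hmu Hmon0 us Hus).
exists (taustar N n m B L mu). split; first by have := taustar_ge1 N n m B L mu Hmu; lra.
move=> tau Htau x u Hode.
apply: (conv_final N n m B Fx L HL mu us Hmu _ _ tau Htau x u Hode).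
  move=> w. have := Hmon1 w us.
  have -> : bvdot (fun i l => F i w l - F i us l) (bvsub w us) =
     bvdot (fun i l => Gx N n m B Fx (ssmap B w) i l - Gx N n m B Fx (ssmap B us) i l) (bvsub w us).
    by apply: sum2_ext => i l; rewrite !HFeq.
  by [].
move=> i l; rewrite -HFeq; exact: Hus.
Qed.
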